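(* Let $X$ be an arbitrary set, let $k: X\times X\to [0,+\infty]$ be a symmetric function, and let $\emptyset\neq H\subset L\subset X$. Then the rendezvous set $R(H,L)$ is nonempty.
   Context: For $H,L\subset X$ and $n\in\mathbb{N}$, the $n$-th rendezvous set of $L$ with respect to $H$ is $R_n(H,L):=\bigcap_{w_1,\dots,w_n\in H}\overline{\mathrm{conv}}\{\frac1n\sum_{j=1}^n k(x,w_j): x\in L\}$, where $\overline{\mathrm{conv}}$ denotes the closed convex hull in $\mathbb{R}\cup\{+\infty\}$ (a closed interval), and $R(H,L):=\bigcap_{n=1}^\infty R_n(H,L)$. Equivalently, $R(H,L)=[M(H,L),\overline{M}(H,L)]$ (with $[a,b]=\emptyset$ if $a>b$), where $M(H,L)=\lim_n M_n(H,L)$, $\overline{M}(H,L)=\lim_n\overline{M}_n(H,L)$, $M_n(H,L)=\sup_{w_1,\dots,w_n\in H}\inf_{x\in L}\frac1n\sum_{j=1}^n k(x,w_j)$ and $\overline{M}_n(H,L)=\inf_{w_1,\dots,w_n\in H}\sup_{x\in L}\frac1n\sum_{j=1}^n k(x,w_j)$. *)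

(* Defs.v *)
From mathcomp Require Import all_boot all_order all_algebra.
From mathcomp Require Import all_classical all_reals ereal.
Set Implicit Arguments. Unset Strict Implicit. Unset Printing Implicit Defensive.
Import Order.TTheory GRing.Theory Num.Theory.
Local Open Scope classical_set_scope.
Local Open Scope ring_scope.
Local Open Scope ereal_scope.

(* Closed convex hull in R ∪ {+oo} of a set S of extended reals: the closed
   interval [inf S, sup S] (empty when inf S > sup S, e.g. S empty). *)
Definition cl_conv (R : realType) (S : set (\bar R)) : set (\bar R) :=
  [set r | ereal_inf S <= r /\ r <= ereal_sup S].

Definition avg_ker (R : realType) (X : Type) (k : X -> X -> \bar R)
  (n : nat) (w : 'I_n -> X) (x : X) : \bar R :=
  ((n%:R)^-1)%:E * (\sum_(j < n) k x (w j)).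

Definition rendezvous_n (R : realType) (X : Type) (k : X -> X -> \bar R)
  (H L : set X) (n : nat) : set (\bar R) :=
  [set r | forall w : 'I_n -> X, (forall j, H (w j)) ->
     cl_conv [set avg_ker k w x | x in L] r].

Definition rendezvous (R : realType) (X : Type) (k : X -> X -> \bar R)
  (H L : set X) : set (\bar R) :=
  [set r | forall n : nat, (0 < n)%N -> rendezvous_n k H L n r].

(* Main.v *)
Require Import Defs.
From mathcomp Require Import all_boot all_order all_algebra.
From mathcomp Require Import all_classical all_reals ereal.
Import Order.TTheory GRing.Theory Num.Theory.
Local Open Scope classical_set_scope.
Local Open Scope ring_scope.
Local Open Scope ereal_scope.

Lemma avg_sum_const (R : realType) (m : nat) (a : \bar R) : (0 < m)%N ->
  ((m%:R)^-1)%:E * (\sum_(i < m) a)%R = a.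
Proof.
move=> m0; rewrite sumr_const card_ord.
have -> : (a *+ m)%R = (m%:R)%:E * a by rewrite mule_natl.
rewrite muleA -EFinM mulVf ?mul1e //.
by rewrite pnatr_eq0 -lt0n.
Qed.

Lemma avg_ge (R : realType) (m : nat) (f : 'I_m -> \bar R) (a : \bar R) :
  (0 < m)%N -> (forall i, a <= f i) -> a <= ((m%:R)^-1)%:E * (\sum_(i < m) f i)%R.
Proof.
move=> m0 h; rewrite -[X in X <= _](@avg_sum_const _ _ a m0).
apply: lee_wpmul2l; first by rewrite lee_fin invr_ge0.
by apply: lee_sum => i _.
Qed.

Lemma avg_le (R : realType) (m : nat) (f : 'I_m -> \bar R) (a : \bar R) :
  (0 < m)%N -> (forall i, f i <= a) -> ((m%:R)^-1)%:E * (\sum_(i < m) f i)%R <= a.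
Proof.
move=> m0 h; rewrite -[X in _ <= X](@avg_sum_const _ _ a m0).
apply: lee_wpmul2l; first by rewrite lee_fin invr_ge0.
by apply: lee_sum => i _.
Qed.

Lemma key (R : realType) (X : Type) (k : X -> X -> \bar R)
  (k_ge0 : forall x y, 0 <= k x y) (k_sym : forall x y, k x y = k y x)
  (H L : set X) (HL : H `<=` L) n m (w : 'I_n -> X) (v : 'I_m -> X) :
  (0 < n)%N -> (0 < m)%N -> (forall j, H (w j)) -> (forall j, H (v j)) ->
  ereal_inf [set avg_ker k w x | x in L] <= ereal_sup [set avg_ker k v x | x in L].
Proof.
move=> n0 m0 Hw Hv.
set S := (\sum_(i < m) \sum_(j < n) k (v i) (w j))%R.
have E1 : (\sum_(i < m) avg_ker k w (v i))%R = ((n%:R)^-1)%:E * S.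
  rewrite /S ge0_sume_distrr //; move=> i _; exact: sume_ge0.
have E2 : (\sum_(j < n) avg_ker k v (w j))%R = ((m%:R)^-1)%:E * S.
  rewrite /S exchange_big /= ge0_sume_distrr //; last first.
    move=> i _; apply: sume_ge0 => j _; exact: k_ge0.
  apply: eq_bigr => j _; rewrite /avg_ker; congr (_ * _).
  by apply: eq_bigr => i _; rewrite k_sym.
apply: (@le_trans _ _ (((m%:R)^-1)%:E * (\sum_(i < m) avg_ker k w (v i))%R)).
  apply: avg_ge => // i; apply: ge_ereal_inf; exists (avg_ker k w (v i)) => //.
  by exists (v i) => //; apply: HL.
rewrite E1 muleA (muleC ((m%:R)^-1)%:E) -muleA -E2.
apply: avg_le => // j; apply: le_ereal_sup_tmp; exists (avg_ker k v (w j)) => //.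
by exists (w j) => //; apply: HL.
Qed.

Theorem proposition2p2 (R : realType) (X : Type) (k : X -> X -> \bar R)
  (k_ge0 : forall x y, 0 <= k x y) (k_sym : forall x y, k x y = k y x)
  (H L : set X) (HL : H `<=` L) (H0 : H !=set0) :
  rendezvous k H L !=set0.
Proof.
pose lows := [set ereal_inf [set avg_ker k (projT2 w) x | x in L] |
  w in [set w : {n : nat & 'I_n -> X} | (0 < projT1 w)%N /\ forall j, H (projT2 w j)]].
exists (ereal_sup lows) => n n0 w Hw; split.
  apply: le_ereal_sup_tmp; exists (ereal_inf [set avg_ker k w x | x in L]) => //.
  by exists (existT _ n w).
apply/ereal_supP => y [[m v] /= [m0 Hv] <-].
exact: (@key _ _ k k_ge0 k_sym H L HL m n v w m0 n0 Hv Hw).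
Qed.
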